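(* Let $n\ge2$, $l\ge1$, $\mathfrak g=D^{(2)}_{n+1}$, $B$ the level-$l$ perfect crystal of the context, $\lambda=l\Lambda_0$, $d=2n$, and $i^{(j)}_a=a-1$ for $1\le a\le n+1$, $i^{(j)}_a=2n+1-a$ for $n+2\le a\le 2n$ (all $j\ge1$). Then: (II) $B^{(j)}_d=B$ for all $j\ge1$; (III) $\langle\lambda_j,h_{i^{(j)}_a}\rangle\le\varepsilon_{i^{(j)}_a}(b)$ for all $j\ge1$, $1\le a\le d$, $b\in B^{(j)}_{a-1}$; (IV') for all $j\ge1$, $a=1,\dots,d$: $\varepsilon_{i^{(j)}_{a+1}}(b^{(j)}_a)=0$, $\varphi_{i^{(j)}_{a+1}}(b^{(j)}_a)>0$ (with $i^{(j)}_{d+1}:=i^{(j+1)}_1$), and $b^{(j+1)}_0=\tilde f_{i^{(j+1)}_1}^mb^{(j)}_d$ with $m=\langle\lambda_{j+1},h_{i^{(j+1)}_1}\rangle$. Moreover $B^{(j)}_0=\{(0,\dots,0)\}$, $B^{(j)}_{2n}=B$; for $1\le a\le n$, $B^{(j)}_a$ is the set of $b\in B$ with all coordinates $0$ except possibly $x_1,\dots,x_a$; for $1\le a\le n-1$, $B^{(j)}_{n+a}$ is the set of $b\in B$ with all coordinates $0$ except possibly $x_1,\dots,x_n,x_0,\bar x_n,\dots,\bar x_{n-a+1}$. Also $b^{(j)}_0=(0,\dots,0)$, and for $1\le a\le n$, $b^{(j)}_a$ has $x_a=l$ and $b^{(j)}_{n+a}$ has $\bar x_{n-a+1}=l$, all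 other coordinates $0$.
   Context: $(x)_+=\max(x,0)$. $B=\{(x_1,\dots,x_n,x_0,\bar x_n,\dots,\bar x_1)\in\mathbb Z^{2n}\times\{0,1\}: x_0\in\{0,1\},\ x_i,\bar x_i\ge0,\ \sum_{i=1}^n(x_i+\bar x_i)\le l\}$. Crystal structure: $\tilde f_0b=(x_1+1,x_2,\dots,\bar x_1)$ if $x_1\ge\bar x_1$, $(x_1,\dots,\bar x_2,\bar x_1-1)$ if $x_1<\bar x_1$; for $1\le i\le n-1$, $\tilde f_ib$ replaces $(x_i,x_{i+1})$ by $(x_i-1,x_{i+1}+1)$ if $x_{i+1}\ge\bar x_{i+1}$, and $(\bar x_{i+1},\bar x_i)$ by $(\bar x_{i+1}-1,\bar x_i+1)$ if $x_{i+1}<\bar x_{i+1}$; $\tilde f_nb$ replaces $(x_n,x_0)$ by $(x_n-1,x_0+1)$ if $x_0=0$, and $(x_0,\bar x_n)$ by $(x_0-1,\bar x_n+1)$ if $x_0=1$; $\tilde e_ib=b'$ iff $\tilde f_ib'=b$; results outside $B$ mean $0$. With $s(b)=\sum_{i=1}^n(x_i+\bar x_i)$: $\varphi_0(b)=l-x_0-s(b)+2(\bar x_1-x_1)_+$, $\varepsilon_0(b)=l-x_0-s(b)+2(x_1-\bar x_1)_+$; $\varphi_i(b)=x_i+(\bar x_{i+1}-x_{i+1})_+$, $\varepsilon_i(b)=\bar x_i+(x_{i+1}-\bar x_{i+1})_+$ ($1\le i\le n-1$); $\varphi_n(b)=2x_n+x_0$, $\varepsilon_n(b)=2\bar x_n+x_0$.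 For $\lambda=l\Lambda_0$: $\lambda_j=l\Lambda_0$ and $\overline b_j=(0,\dots,0)$ for all $j$; $\langle\lambda_j,h_i\rangle$ is the coefficient of $\Lambda_i$ in $\lambda_j$. Given $d$, $i^{(j)}_a$: $B^{(j)}_0=\{\overline b_j\}$, $B^{(j)}_a=\bigcup_{n\ge0}\tilde f_{i^{(j)}_a}^nB^{(j)}_{a-1}\setminus\{0\}$; $b^{(j)}_0=\overline b_j$, $b^{(j)}_a=\tilde f_{i^{(j)}_a}^{\varphi_{i^{(j)}_a}(b^{(j)}_{a-1})}b^{(j)}_{a-1}$. *)

(* Defs.v *)
From mathcomp Require Import all_boot all_algebra.
Set Implicit Arguments. Unset Strict Implicit. Unset Printing Implicit Defensive.
Import GRing.Theory Num.Theory.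

(* An element b = (x_1,...,x_n, x_0, xbar_n, ..., xbar_1).
   ex i = x_i, exb i = xbar_i for 1 <= i <= n (other indices are required
   to be 0 for elements of B); ex0 = x_0. *)
Record elt := Elt { ex : nat -> nat; ex0 : nat; exb : nat -> nat }.

Definition zerof : nat -> nat := fun _ => 0.
Definition zeroE : elt := Elt zerof 0 zerof.

Definition upd (f : nat -> nat) (k v : nat) : nat -> nat :=
  fun i => if i == k then v else f i.

Definition sB (n : nat) (b : elt) : nat :=
  \sum_(1 <= i < n.+1) (ex b i + exb b i).

Definition inB (n l : nat) (b : elt) : Prop :=
  [/\ ex0 b <= 1,
      (forall i, (i == 0) || (n < i) -> ex b i = 0 /\ exb b i = 0)
    & ex0 b + sB n b <= l].

(* Raw action of f_i : (decremented coordinate was >= 1, new element). *)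
Definition f_raw (n : nat) (i : nat) (b : elt) : bool * elt :=
  let x := ex b in let x0 := ex0 b in let xb := exb b in
  if i == 0 then
    (if xb 1 <= x 1 then (true, Elt (upd x 1 (x 1).+1) x0 xb)
     else (0 < xb 1, Elt x x0 (upd xb 1 (xb 1).-1)))
  else if i < n then
    (if xb i.+1 <= x i.+1 then
       (0 < x i, Elt (upd (upd x i (x i).-1) i.+1 (x i.+1).+1) x0 xb)
     else
       (0 < xb i.+1, Elt x x0 (upd (upd xb i.+1 (xb i.+1).-1) i (xb i).+1)))
  else if i == n then
    (if x0 == 0 then (0 < x n, Elt (upd x n (x n).-1) x0.+1 xb)
     else (0 < x0, Elt x x0.-1 (upd xb n (xb n).+1)))
  else (false, b).

(* \tilde f_i : None stands for 0 (result outside B). *)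
Definition ft (n l i : nat) (b : elt) : option elt :=
  let (ok, b') := f_raw n i b in
  if ok && (ex0 b' <= 1) && (ex0 b' + sB n b' <= l) then Some b' else None.

Fixpoint fpow (n l i k : nat) (b : elt) : option elt :=
  match k with
  | 0 => Some b
  | k'.+1 => match fpow n l i k' b with Some c => ft n l i c | None => None end
  end.

Definition pos (z : int) : int := if (0 <= z)%R then z else 0%R.

Definition phi (n l i : nat) (b : elt) : int :=
  if i == 0 then
    (Posz l - Posz (ex0 b) - Posz (sB n b) + 2 * pos (Posz (exb b 1) - Posz (ex b 1)))%R
  else if i < n then
    (Posz (ex b i) + pos (Posz (exb b i.+1) - Posz (ex b i.+1)))%R
  else if i == n then Posz (2 * ex b n + ex0 b)
  else 0%R.

Definition eps (n l i : nat) (b : elt) : int :=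
  if i == 0 then
    (Posz l - Posz (ex0 b) - Posz (sB n b) + 2 * pos (Posz (ex b 1) - Posz (exb b 1)))%R
  else if i < n then
    (Posz (exb b i) + pos (Posz (ex b i.+1) - Posz (exb b i.+1)))%R
  else if i == n then Posz (2 * exb b n + ex0 b)
  else 0%R.

(* lambda_j = l Lambda_0 for all j : <lambda_j, h_i> *)
Definition lamh (l j i : nat) : nat := if i == 0 then l else 0.

Definition dd (n : nat) : nat := 2 * n.
Definition idx (n j a : nat) : nat := if a <= n.+1 then a - 1 else (2 * n).+1 - a.
Definition inext (n j a : nat) : nat :=
  if a == dd n then idx n j.+1 1 else idx n j a.+1.

Fixpoint Bset (n l j a : nat) : elt -> Prop :=
  match a with
  | 0 => fun b => b = zeroE
  | a'.+1 => fun b => exists2 c, Bset n l j a' c &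
               exists k, fpow n l (idx n j a'.+1) k c = Some b
  end.

Definition toNat (z : int) : nat := match z with Posz m => m | Negz _ => 0 end.

(* b^{(j)}_a (None would mean 0) *)
Fixpoint bb (n l j a : nat) : option elt :=
  match a with
  | 0 => Some zeroE
  | a'.+1 => match bb n l j a' with
             | Some c => fpow n l (idx n j a'.+1) (toNat (phi n l (idx n j a'.+1) c)) c
             | None => None
             end
  end.

(* Main.v *)
Require Import Defs.
From mathcomp Require Import all_boot all_algebra.
From mathcomp Require Import zify.
From Stdlib Require Import FunctionalExtensionality.
Import GRing.Theory Num.Theory.

Lemma elt_eq b c : (forall i, ex b i = ex c i) -> ex0 b = ex0 c ->
  (forall i, exb b i = exb c i) -> b = c.
Proof.
case: b => x x0 xb; case: c => y y0 yb /= H1 H2 H3.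
have -> : x = y by apply: functional_extensionality.
have -> : xb = yb by apply: functional_extensionality.
by rewrite H2.
Qed.

Lemma sum_pt (F G : nat -> nat) a b k : a <= k < b ->
  (forall j, j != k -> F j = G j) ->
  \sum_(a <= i < b) F i + G k = \sum_(a <= i < b) G i + F k.
Proof.
move=> /andP[hak hkb] hFG.
elim: b hkb => // b IH hkb.
have hab : a <= b by lia.
rewrite !big_nat_recr //=.
case: (ltngtP k b) => hk.
- have := IH hk. have := hFG b. rewrite neq_ltn hk orbT => -> //. lia.
- lia.
- subst k.
  rewrite (@eq_big_nat _ _ _ a b F G); first lia.
  move=> i /andP[_ hi]; apply: hFG; lia.
Qed.

Lemma sum_pt2 (F G : nat -> nat) a b p q : a <= p < b -> a <= q < b -> p != q ->
  (forall j, j != p -> j != q -> F j = G j) ->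
  \sum_(a <= i < b) F i + G p + G q = \sum_(a <= i < b) G i + F p + F q.
Proof.
move=> hp hq hpq hFG.
pose H j := if j == p then G p else F j.
have e1 := @sum_pt F H a b p hp.
have e2 := @sum_pt H G a b q hq.
have Hp : H p = G p by rewrite /H eqxx.
have Hq : H q = F q by rewrite /H (negbTE (_ : q != p)) // eq_sym.
rewrite Hp in e1; rewrite Hq in e2.
have : (forall j, j != p -> F j = H j) by move=> j hj; rewrite /H (negbTE hj).
move/e1 => {}e1.
have : (forall j, j != q -> H j = G j).
  move=> j hj; rewrite /H; case: eqP => [->//|/eqP hj2]; exact: hFG.
move/e2 => {}e2.
lia.
Qed.

Definition w (b : elt) j := ex b j + exb b j.

Lemma sB_pt n b c k : 1 <= k <= n -> (forall j, j != k -> w b j = w c j) ->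
  sB n b + w c k = sB n c + w b k.
Proof. move=> hk h; apply: (@sum_pt (w b) (w c)) => //; lia. Qed.

Lemma sB_pt2 n b c p q : 1 <= p <= n -> 1 <= q <= n -> p != q ->
  (forall j, j != p -> j != q -> w b j = w c j) ->
  sB n b + w c p + w c q = sB n c + w b p + w b q.
Proof. move=> hp hq hpq h; apply: (@sum_pt2 (w b) (w c)) => //; lia. Qed.

Lemma sB_zero n : sB n zeroE = 0.
Proof. by rewrite /sB big1. Qed.

Lemma w_le_sB n b k : 1 <= k <= n -> w b k <= sB n b.
Proof.
move=> hk.
have := @sB_pt n b (Elt (upd (ex b) k 0) (ex0 b) (upd (exb b) k 0)) k hk.
rewrite /w /upd /= eqxx.
have: forall j, j != k -> ex b j + exb b j = (if j == k then 0 else ex b j) + (if j == k then 0 else exb b j).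
  by move=> j /negbTE ->.
move=> h1 h2; have := h2 h1; lia.
Qed.


Ltac updtac := rewrite /upd /zerof /=; repeat (case: eqP => ?); try subst; try lia.

Lemma sB_upd_ex n x x0 xb k v : 1 <= k <= n ->
  sB n (Elt (upd x k v) x0 xb) + x k = sB n (Elt x x0 xb) + v.
Proof.
move=> hk; have := @sB_pt n (Elt (upd x k v) x0 xb) (Elt x x0 xb) k hk.
rewrite /w /= /upd eqxx => h.
have : forall j, j != k -> (if j == k then v else x j) + xb j = x j + xb j.
  by move=> j /negbTE ->.
move/h; lia.
Qed.

Lemma sB_upd_exb n x x0 xb k v : 1 <= k <= n ->
  sB n (Elt x x0 (upd xb k v)) + xb k = sB n (Elt x x0 xb) + v.
Proof.
move=> hk; have := @sB_pt n (Elt x x0 (upd xb k v)) (Elt x x0 xb) k hk.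
rewrite /w /= /upd eqxx => h.
have : forall j, j != k -> x j + (if j == k then v else xb j) = x j + xb j.
  by move=> j /negbTE ->.
move/h; lia.
Qed.

Lemma sB_x0 n x y z xb : sB n (Elt x y xb) = sB n (Elt x z xb).
Proof. by []. Qed.

Lemma fpow_add n l i k1 k2 c :
  fpow n l i (k1 + k2) c =
  match fpow n l i k1 c with Some d => fpow n l i k2 d | None => None end.
Proof.
elim: k2 => [|k IH]; first by rewrite addn0; case: fpow.
rewrite addnS /= IH; by case: (fpow n l i k1 c).
Qed.

Lemma upd_same f k v : upd f k v k = v.
Proof. by rewrite /upd eqxx. Qed.
Lemma upd_diff f k v j : j != k -> upd f k v j = f j.
Proof. by rewrite /upd => /negbTE ->. Qed.

Lemma ft_fin (b' b'' : elt) (c1 c2 : bool) : c1 -> c2 -> b' = b'' ->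
  (if true && c1 && c2 then Some b' else None) = Some b''.
Proof. by move=> -> -> ->. Qed.

Lemma ft_fin3 (b' b'' : elt) (c0 c1 c2 : bool) : c0 -> c1 -> c2 -> b' = b'' ->
  (if c0 && c1 && c2 then Some b' else None) = Some b''.
Proof. by move=> -> -> -> ->. Qed.

Lemma fpowS n l i k c : fpow n l i k.+1 c =
  match fpow n l i k c with Some d => ft n l i d | None => None end.
Proof. by []. Qed.

Lemma fpow_up0 n l k x x0 xb : 1 <= n -> xb 1 <= x 1 -> x0 <= 1 ->
  x0 + sB n (Elt x x0 xb) + k <= l ->
  fpow n l 0 k (Elt x x0 xb) = Some (Elt (upd x 1 (x 1 + k)) x0 xb).
Proof.
move=> hn h1 h2; elim: k => [|k IH] h3.
  by rewrite /=; congr Some; apply: elt_eq => [j|//|j] /=; updtac.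
rewrite /= IH; last lia.
rewrite /ft /f_raw /= upd_same ifT /=; last lia.
have E : upd (upd x 1 (x 1 + k)) 1 (x 1 + k).+1 = upd x 1 (x 1 + k.+1).
  apply: functional_extensionality => j; updtac.
rewrite E; apply: ft_fin => //=.
have e := @sB_upd_ex n x x0 xb 1 (x 1 + k.+1) (ltac:(lia)).
lia.
Qed.

Lemma sB_upd2_ex n x x0 xb i i' a b : 1 <= i <= n -> 1 <= i' <= n -> i != i' ->
  sB n (Elt (upd (upd x i a) i' b) x0 xb) + x i + x i' = sB n (Elt x x0 xb) + a + b.
Proof.
move=> hi hi' hii.
have e1 := @sB_upd_ex n (upd x i a) x0 xb i' b hi'.
have e2 := @sB_upd_ex n x x0 xb i a hi.
rewrite upd_diff in e1; last by rewrite eq_sym.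
lia.
Qed.

Lemma sB_upd2_exb n x x0 xb i i' a b : 1 <= i <= n -> 1 <= i' <= n -> i != i' ->
  sB n (Elt x x0 (upd (upd xb i a) i' b)) + xb i + xb i' = sB n (Elt x x0 xb) + a + b.
Proof.
move=> hi hi' hii.
have e1 := @sB_upd_exb n x x0 (upd xb i a) i' b hi'.
have e2 := @sB_upd_exb n x x0 xb i a hi.
rewrite upd_diff in e1; last by rewrite eq_sym.
lia.
Qed.

Lemma sB_upd_both n x x0 xb k a b : 1 <= k <= n ->
  sB n (Elt (upd x k a) x0 (upd xb k b)) + x k + xb k = sB n (Elt x x0 xb) + a + b.
Proof.
move=> hk.
have e1 := @sB_upd_exb n (upd x k a) x0 xb k b hk.
have e2 := @sB_upd_ex n x x0 xb k a hk.
lia.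
Qed.

Lemma fpow_down0 n l k x x0 xb : 1 <= n -> x 1 + k <= xb 1 -> x0 <= 1 ->
  x0 + sB n (Elt x x0 xb) <= l ->
  fpow n l 0 k (Elt x x0 xb) = Some (Elt x x0 (upd xb 1 (xb 1 - k))).
Proof.
move=> hn h2 h3 h4; elim: k h2 => [|k IH] h1.
  by rewrite /=; congr Some; apply: elt_eq => [j|//|j] /=; updtac.
rewrite /= IH; last lia.
rewrite /ft /f_raw /= upd_same ifF /=; last lia.
have E : upd (upd xb 1 (xb 1 - k)) 1 (xb 1 - k).-1 = upd xb 1 (xb 1 - k.+1).
  apply: functional_extensionality => j; updtac.
rewrite E; apply: ft_fin => //=; first lia.
have e := @sB_upd_exb n x x0 xb 1 (xb 1 - k.+1) (ltac:(lia)).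
lia.
Qed.

Lemma fpow_up n l i k x x0 xb : 1 <= i < n -> xb i.+1 <= x i.+1 -> k <= x i ->
  x0 <= 1 -> x0 + sB n (Elt x x0 xb) <= l ->
  fpow n l i k (Elt x x0 xb) =
  Some (Elt (upd (upd x i (x i - k)) i.+1 (x i.+1 + k)) x0 xb).
Proof.
move=> hi h1 + h3 h4; elim: k => [|k IH] h2.
  by rewrite /=; congr Some; apply: elt_eq => [j|//|j] /=; updtac.
rewrite /= IH; last lia.
have hi0 : (i == 0) = false by apply/eqP; lia.
have hin : (i < n) = true by lia.
have hii : i != i.+1 by lia.
rewrite /ft /f_raw /= hi0 hin upd_same upd_diff // upd_same ifT /=; last lia.
have E : upd (upd (upd (upd x i (x i - k)) i.+1 (x i.+1 + k)) i (x i - k).-1) i.+1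
     (x i.+1 + k).+1 = upd (upd x i (x i - k.+1)) i.+1 (x i.+1 + k.+1).
  apply: functional_extensionality => j; updtac.
rewrite E; apply: ft_fin => //=; first lia.
have e := @sB_upd2_ex n x x0 xb i i.+1 (x i - k.+1) (x i.+1 + k.+1) (ltac:(lia)) (ltac:(lia)) hii.
lia.
Qed.

Lemma fpow_down n l i k x x0 xb : 1 <= i < n -> x i.+1 + k <= xb i.+1 ->
  x0 <= 1 -> x0 + sB n (Elt x x0 xb) <= l ->
  fpow n l i k (Elt x x0 xb) =
  Some (Elt x x0 (upd (upd xb i.+1 (xb i.+1 - k)) i (xb i + k))).
Proof.
move=> hi + h3 h4; elim: k => [|k IH] h2.
  by rewrite /=; congr Some; apply: elt_eq => [j|//|j] /=; updtac.
rewrite /= IH; last lia.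
have hi0 : (i == 0) = false by apply/eqP; lia.
have hin : (i < n) = true by lia.
have hii : i.+1 != i by lia.
rewrite /ft /f_raw /= hi0 hin upd_diff // upd_same ifF /=; last lia.
rewrite upd_same.
have E : upd (upd (upd (upd xb i.+1 (xb i.+1 - k)) i (xb i + k)) i.+1 (xb i.+1 - k).-1) i
     (xb i + k).+1 = upd (upd xb i.+1 (xb i.+1 - k.+1)) i (xb i + k.+1).
  apply: functional_extensionality => j; updtac.
rewrite E; apply: ft_fin => //=; first lia.
have e := @sB_upd2_exb n x x0 xb i.+1 i (xb i.+1 - k.+1) (xb i + k.+1) (ltac:(lia)) (ltac:(lia)) hii.
lia.
Qed.

Lemma fpow_n n l m x xb : 1 <= n -> sB n (Elt x 0 xb) <= l ->
  (m <= x n -> fpow n l n (2 * m) (Elt x 0 xb) =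
     Some (Elt (upd x n (x n - m)) 0 (upd xb n (xb n + m)))) /\
  (m < x n -> fpow n l n (2 * m).+1 (Elt x 0 xb) =
     Some (Elt (upd x n (x n - m.+1)) 1 (upd xb n (xb n + m)))).
Proof.
move=> hn hs.
have hn0 : (n == 0) = false by apply/eqP; lia.
have hnn : (n < n) = false by lia.
elim: m => [|m [IHa IHb]].
  have A : fpow n l n (2 * 0) (Elt x 0 xb) = Some (Elt (upd x n (x n - 0)) 0 (upd xb n (xb n + 0))).
    by rewrite /=; congr Some; apply: elt_eq => [j|//|j] /=; updtac.
  split => // h.
  rewrite /= /ft /f_raw /= hn0 hnn eqxx /=.
  apply: ft_fin3 => //=; last by apply: elt_eq => [j|//|j] /=; updtac.
  have e := @sB_upd_ex n x 1 xb n (x n).-1 (ltac:(lia)).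
  rewrite (@sB_x0 n x 1 0 xb) in e.
  lia.
have A : m.+1 <= x n -> fpow n l n (2 * m.+1) (Elt x 0 xb) =
     Some (Elt (upd x n (x n - m.+1)) 0 (upd xb n (xb n + m.+1))).
  move=> h.
  have -> : 2 * m.+1 = (2 * m).+2 by lia.
  rewrite fpowS IHb; last lia.
  rewrite /ft /f_raw /= hn0 hnn eqxx /= upd_same.
  have E : upd (upd xb n (xb n + m)) n (xb n + m).+1 = upd xb n (xb n + m.+1).
    apply: functional_extensionality => j; updtac.
  rewrite E ifT //.
  have e := @sB_upd_both n x 0 xb n (x n - m.+1) (xb n + m.+1) (ltac:(lia)).
  have e2 := @sB_upd_both n x 0 xb n (x n - m.+1) (xb n + m) (ltac:(lia)).
  have e3 := @sB_upd_exb n (upd x n (x n - m.+1)) 0 (upd xb n (xb n + m)) n (xb n + m).+1 (ltac:(lia)).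
  rewrite E upd_same in e3.
  lia.
split => // h.
rewrite fpowS A; last lia.
rewrite /ft /f_raw /= hn0 hnn eqxx /= upd_same.
apply: ft_fin3 => //=; first lia; last by apply: elt_eq => [j|//|j] /=; updtac.
have e := @sB_upd_ex n (upd x n (x n - m.+1)) 1 (upd xb n (xb n + m.+1)) n (x n - m.+1).-1 (ltac:(lia)).
rewrite upd_same in e.
have e2 := @sB_upd_both n x 0 xb n (x n - m.+1) (xb n + m.+1) (ltac:(lia)).
rewrite !(@sB_x0 n _ 1 0) in e *.
lia.
Qed.

Lemma ft_raw n l i c b : ft n l i c = Some b ->
  f_raw n i c = (true, b) /\ ex0 b <= 1 /\ ex0 b + sB n b <= l.
Proof.
rewrite /ft; case: (f_raw n i c) => ok b'.
case: ifP => // /andP[/andP[h0 h1] h2] [<-].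
by move: h0 => /= ->.
Qed.

Lemma ft_frame n l i c b : 1 <= n -> ft n l i c = Some b ->
  forall j, j = 0 \/ n < j \/ (j <> i /\ j <> i.+1) ->
  ex b j = ex c j /\ exb b j = exb c j.
Proof.
move=> hn /ft_raw [+ _] j hj.
case: c => x x0 xb; rewrite /f_raw /=.
case: ifP => [/eqP hi0|hi0].
  subst i; case: ifP => _ /(congr1 snd) /= <-; split; updtac.
case: ifP => hin.
  case: ifP => _ /(congr1 snd) /= <-; split; updtac.
case: ifP => [/eqP hin2|hin2].
  subst i; case: ifP => _ /(congr1 snd) /= <-; split; updtac.
by case.
Qed.

Lemma ft_branch n l i c b : ft n l i c = Some b -> i < n ->
  exb c i.+1 <= ex c i.+1 -> ex0 b = ex0 c /\ exb b = exb c.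
Proof.
move=> /ft_raw [E _] hi h; move: E h.
case: c => x x0 xb /= E h; move: E; rewrite /f_raw /=.
case: ifP => [/eqP hi0|_].
  by subst i; rewrite h => /(congr1 snd) /= <-.
by rewrite hi h => /(congr1 snd) /= <-.
Qed.



Definition PA n l a b := inB n l b /\ (forall i, a < i -> ex b i = 0) /\ ex0 b = 0 /\
  (forall i, exb b i = 0).
Definition PB n l a b := inB n l b /\ (forall i, i < n - a + 1 -> exb b i = 0).

Lemma fpow_inv (P Q : elt -> Prop) n l i k c b :
  (forall c, P c -> Q c) -> (forall c b, Q c -> ft n l i c = Some b -> Q b) ->
  P c -> fpow n l i k c = Some b -> Q b.
Proof.
move=> hPQ hQ hc; elim: k b => [|k IH] b /=; first by move=> [<-]; exact: hPQ.
case E: (fpow n l i k c) => [d|//] hd.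
exact: hQ (IH d E) hd.
Qed.

Lemma Bset_step n l j a (P Q : elt -> Prop) :
  (forall c, Bset n l j a c <-> P c) ->
  (forall c b k, P c -> fpow n l (idx n j a.+1) k c = Some b -> Q b) ->
  (forall b, Q b -> exists2 c, P c & exists k, fpow n l (idx n j a.+1) k c = Some b) ->
  forall b, Bset n l j a.+1 b <-> Q b.
Proof.
move=> H hs hc b; split.
  by case=> c /H hc' [k hk]; exact: hs hk.
by move/hc => [c /H hc' hk]; exists c.
Qed.

Lemma idx_lo n j a : a <= n -> idx n j a.+1 = a.
Proof. move=> h; rewrite /idx ifT; lia. Qed.

Lemma idx_hi n j a : 1 <= a < n -> idx n j (n + a).+1 = n - a.
Proof. move=> h; rewrite /idx ifF; lia. Qed.

Lemma inB_zero n l : inB n l zeroE.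
Proof. split => //=; rewrite sB_zero //. Qed.

Lemma PA_closed n l a c b : 1 <= n -> a < n -> PA n l a.+1 c -> ft n l a c = Some b ->
  PA n l a.+1 b.
Proof.
move=> hn ha [[h0 hz hs] [hx [hx0 hxb]]] hf.
have [_ [hb0 hbs]] := @ft_raw _ _ _ _ _ hf.
have fr := @ft_frame _ _ _ _ _ hn hf.
have [e1 e2] := @ft_branch n l a c b hf ha (ltac:(rewrite hxb; lia)).
split; [split|split; [|split]] => //.
- move=> i hi; have [-> ->] := fr i (ltac:(move: hi => /orP; lia)); exact: hz.
- move=> i hi; have [-> _] := fr i (ltac:(lia)); exact: hx.
- by rewrite e1.
- by move=> i; rewrite e2.
Qed.

Lemma PA_mono n l a c : PA n l a c -> PA n l a.+1 c.
Proof. by move=> [h1 [h2 h3]]; split => //; split => // i hi; apply: h2; lia. Qed.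

Lemma stageA n l j a : 1 <= n -> a < n ->
  (forall c, Bset n l j a c <-> PA n l a c) ->
  forall b, Bset n l j a.+1 b <-> PA n l a.+1 b.
Proof.
move=> hn ha H.
have hi : idx n j a.+1 = a by apply: idx_lo; lia.
apply: Bset_step H _ _; rewrite hi.
  move=> c b k hc; apply: (@fpow_inv (PA n l a)) hc => //; first exact: PA_mono.
  move=> c' b'; exact: PA_closed.
move=> b hb.
have [[h0 hz hs] [hx [hx0 hxb]]] := hb.
have hz0 := hz 0 (erefl _); have hzn := fun i (h : n < i) => hz i (ltac:(lia)).
case: b hb h0 hz hs hx hx0 hxb hz0 hzn => x x0 xb /= hb h0 hz hs hx hx0 hxb hz0 hzn.
subst x0.
case: (posnP a) => [a0|apos].
  subst a; exists zeroE; first by split; [exact: inB_zero|split].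
  exists (x 1); rewrite /zeroE.
  have hw := @w_le_sB n (Elt x 0 xb) 1 (ltac:(lia)).
  rewrite /w /= in hw.
  rewrite fpow_up0 //=; last by rewrite sB_zero; lia.
  congr Some; apply: elt_eq => [i||i] //=; try by rewrite hxb.
  updtac; case: (posnP i) => [->|ip]; [by case: hz0 | by rewrite hx //; lia].
set c := Elt (upd (upd x a (x a + x a.+1)) a.+1 0) 0 xb.
have hsc := @sB_upd2_ex n x 0 xb a a.+1 (x a + x a.+1) 0 (ltac:(lia)) (ltac:(lia)) (ltac:(lia)).
exists c.
  split; [split|split; [|split]] => //=.
  - move=> i /orP hi'; rewrite hxb; split => //; updtac.
    case: hi' => [/eqP ->|/hzn []] //; by case: hz0.
  - rewrite /c; lia.
  - by move=> i hi'; updtac; rewrite hx //; lia.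
exists (x a.+1).
rewrite fpow_up //=; first last.
- lia.
- updtac.
- by rewrite hxb.
- lia.
congr Some; apply: elt_eq => //= i; updtac.
Qed.

Lemma PA0 n l c : c = zeroE <-> PA n l 0 c.
Proof.
split => [->|[[h0 hz hs] [hx [hx0 hxb]]]].
  by split; [exact: inB_zero|split].
case: c h0 hz hs hx hx0 hxb => x x0 xb /= h0 hz hs hx hx0 hxb.
apply: elt_eq => [i||i] //=.
case: (posnP i) => [->|ip]; [by case: (hz 0 (erefl _)) | by rewrite hx].
Qed.

Lemma BsetA n l j a : 1 <= n -> a <= n -> forall b, Bset n l j a b <-> PA n l a b.
Proof.
move=> hn; elim: a => [|a IH] ha b; first exact: PA0.
apply: (@stageA n l j a hn (ltac:(lia))).
by move=> c; apply: IH; lia.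
Qed.

Lemma PB_closed n l a c b : 1 <= n -> 1 <= a <= n -> PB n l a c ->
  ft n l (n - a + 1) c = Some b -> PB n l a b.
Proof.
move=> hn ha [[h0 hz hs] hx] hf.
have [_ [hb0 hbs]] := @ft_raw _ _ _ _ _ hf.
have fr := @ft_frame _ _ _ _ _ hn hf.
split; [split|] => //.
- move=> i hi; have [-> ->] := fr i (ltac:(move: hi => /orP; lia)); exact: hz.
- move=> i hi; have [_ ->] := fr i (ltac:(lia)); exact: hx.
Qed.

Lemma compl_n n l b : 1 <= n -> PB n l 1 b ->
  exists2 c, PA n l n c & exists k, fpow n l n k c = Some b.
Proof.
move=> hn [[h0 hz hs] hxb].
have hz0 := hz 0 (erefl _); have hzn := fun i (h : n < i) => hz i (ltac:(lia)).
case: b h0 hz hs hxb hz0 hzn => x x0 xb /= h0 hz hs hxb hz0 hzn.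
set m := xb n.
set c := Elt (upd x n (x n + m + x0)) 0 (upd xb n 0).
have hsc := @sB_upd_both n x 0 xb n (x n + m + x0) 0 (ltac:(lia)).
rewrite (@sB_x0 n x 0 x0) in hsc.
exists c.
  split; [split|split; [|split]] => //=.
  - move=> i /orP hi'; split; updtac.
      by case: hi' => [/eqP ->|/hzn []] //; case: hz0.
    by case: hi' => [/eqP ->|/hzn []] //; case: hz0.
  - rewrite /c; lia.
  - move=> i hi'; updtac; by case: (hzn i hi').
  - move=> i; updtac; case: (ltngtP i n) => hin; first (by apply: hxb; lia);
      [by case: (hzn i hin)|lia].
have hsc' : sB n c <= l by rewrite /c; lia.
have [A B] := @fpow_n n l m (upd x n (x n + m + x0)) (upd xb n 0) hn hsc'.
rewrite upd_same in A B.
have : x0 = 0 \/ x0 = 1 by lia.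
case=> ?; subst x0.
  exists (2 * m); rewrite A; last lia.
  congr Some; apply: elt_eq => [i||i] /=; updtac.
exists (2 * m).+1; rewrite B; last lia.
congr Some; apply: elt_eq => [i||i] /=; updtac.
Qed.

Lemma compl_mid n l i b : 1 <= i < n -> inB n l b -> (forall j, j < i -> exb b j = 0) ->
  exists2 c, (inB n l c /\ forall j, j < i.+1 -> exb c j = 0) &
    exists k, fpow n l i k c = Some b.
Proof.
move=> hi [h0 hz hs] hxb.
have hz0 := hz 0 (erefl _); have hzn := fun j (h : n < j) => hz j (ltac:(lia)).
case: b h0 hz hs hxb hz0 hzn => x x0 xb /= h0 hz hs hxb hz0 hzn.
have hii : i != i.+1 by lia.
have hii' : i.+1 != i by lia.
pose t := x i.+1 - xb i.+1.
have e1 := @sB_upd2_ex n x x0 xb i i.+1 (x i + t) (x i.+1 - t) (ltac:(lia)) (ltac:(lia)) hii.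
have e2 := @sB_upd2_exb n (upd (upd x i (x i + t)) i.+1 (x i.+1 - t)) x0 xb i.+1 i
  (xb i.+1 + xb i) 0 (ltac:(lia)) (ltac:(lia)) hii'.
have hsc : x0 + sB n (Elt (upd (upd x i (x i + t)) i.+1 (x i.+1 - t)) x0
              (upd (upd xb i.+1 (xb i.+1 + xb i)) i 0)) <= l.
  rewrite /t in e1 e2 *; lia.
exists (Elt (upd (upd x i (x i + t)) i.+1 (x i.+1 - t)) x0
              (upd (upd xb i.+1 (xb i.+1 + xb i)) i 0)).
  split; [split|] => //=.
  - move=> j /orP hj; split; updtac;
      by case: hj => [/eqP ->|/hzn []] //; case: hz0.
  - move=> j hj; updtac; apply: hxb; lia.
exists (xb i + t).
rewrite fpow_add fpow_down //=; first last.
- updtac.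
have e3 := @sB_upd2_exb n (upd (upd x i (x i + t)) i.+1 (x i.+1 - t)) x0
  (upd (upd xb i.+1 (xb i.+1 + xb i)) i 0) i.+1 i
  (upd (upd xb i.+1 (xb i.+1 + xb i)) i 0 i.+1 - xb i)
  (upd (upd xb i.+1 (xb i.+1 + xb i)) i 0 i + xb i) (ltac:(lia)) (ltac:(lia)) hii'.
have v1 : upd (upd xb i.+1 (xb i.+1 + xb i)) i 0 i.+1 = xb i.+1 + xb i.
  by rewrite upd_diff // upd_same.
have v2 : upd (upd xb i.+1 (xb i.+1 + xb i)) i 0 i = 0 by rewrite upd_same.
rewrite v1 v2 in e3 *.
case: (leqP (xb i.+1) (x i.+1)) => hRQ.
  rewrite fpow_up //=; first last.
  - rewrite /t in hsc e1 e2 e3 *; lia.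
  - updtac.
  - updtac.
  - updtac.
  congr Some; apply: elt_eq => [j||j] /=; rewrite /t; updtac.
have t0 : t = 0 by rewrite /t; lia.
rewrite t0 /=.
congr Some; apply: elt_eq => [j||j] /=; rewrite ?t0; updtac.
Qed.

Lemma BsetB1 n l j : 1 <= n -> forall b, Bset n l j n.+1 b <-> PB n l 1 b.
Proof.
move=> hn.
have hi : idx n j n.+1 = n by apply: idx_lo.
apply: Bset_step (@BsetA n l j n hn (leqnn n)) _ _; rewrite hi.
  move=> c b k hc; apply: (@fpow_inv (PA n l n)) hc => //.
    move=> c' [h1 [h2 [h3 h4]]]; split => // i _; exact: h4.
  move=> c' b' hc' hf; apply: (@PB_closed n l 1 c' b' hn (ltac:(lia)) hc').
  by have -> : n - 1 + 1 = n by lia.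
move=> b hb; exact: compl_n.
Qed.

Lemma BsetB n l j a : 1 <= n -> 1 <= a <= n -> forall b, Bset n l j (n + a) b <-> PB n l a b.
Proof.
move=> hn; elim: a => [|a IH] ha; first lia.
case: (posnP a) => [a0|apos].
  by subst a; rewrite addn1; exact: BsetB1.
rewrite addnS.
have hi : idx n j (n + a).+1 = n - a by apply: idx_hi; lia.
apply: Bset_step (IH (ltac:(lia))) _ _; rewrite hi.
  move=> c b k hc; apply: (@fpow_inv (PB n l a)) hc => //.
    move=> c' [h1 h2]; split => // i hi'; apply: h2; lia.
  move=> c' b' hc' hf; apply: (@PB_closed n l a.+1 c' b' hn (ltac:(lia)) hc').
  by have -> : n - a.+1 + 1 = n - a by lia.
move=> b [hb1 hb2].
have [c [hc1 hc2] hk] := @compl_mid n l (n - a) b (ltac:(lia)) hb1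
  (fun j hj => hb2 j (ltac:(lia))).
exists c => //; split => // i hi'; apply: hc2; lia.
Qed.



Lemma pos_cases z : (pos z = z /\ (0 <= z)%R) \/ (pos z = 0%R /\ (z < 0)%R).
Proof. rewrite /pos; case: (lerP 0 z) => h; [left|right] => //. Qed.

Ltac postac := repeat match goal with |- context [pos ?z] =>
  let h := fresh in have h := pos_cases z; case: h => [[-> ?]|[-> ?]] end; lia.

Definition ea l a := Elt (upd zerof a l) 0 zerof.
Definition eb n l a := Elt zerof 0 (upd zerof (n - a + 1) l).

Lemma pos_nat m : pos (Posz m) = Posz m.
Proof. by []. Qed.

Lemma pos0 : pos 0%R = 0%R.
Proof. by []. Qed.

Lemma pos_neg m : pos (0 - Posz m)%R = 0%R.
Proof. postac. Qed.

Lemma sB_ea n l a : 1 <= a <= n -> sB n (ea l a) = l.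
Proof.
move=> ha; have := @sB_upd_ex n zerof 0 zerof a l ha.
have -> : sB n (Elt zerof 0 zerof) = 0 by apply: sB_zero.
rewrite /ea => h; have : zerof a = 0 by []. lia.
Qed.

Lemma sB_eb n l k : 1 <= k <= n -> sB n (Elt zerof 0 (upd zerof k l)) = l.
Proof.
move=> ha; have := @sB_upd_exb n zerof 0 zerof k l ha.
have -> : sB n (Elt zerof 0 zerof) = 0 by apply: sB_zero.
move=> h; have : zerof k = 0 by []. lia.
Qed.

Lemma phi0_zero n l : phi n l 0 zeroE = Posz l.
Proof. rewrite /phi /= sB_zero /zerof /=; postac. Qed.

Lemma eps0_zero n l : eps n l 0 zeroE = Posz l.
Proof. rewrite /eps /= sB_zero /zerof /=; postac. Qed.

Lemma phi_ea n l a : 1 <= a < n -> phi n l a (ea l a) = Posz l.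
Proof.
move=> ha; rewrite /phi ifF; last lia.
rewrite ifT; last lia.
rewrite /ea /= upd_same upd_diff; last lia.
rewrite /zerof; postac.
Qed.

Lemma eps_ea n l a : 1 <= a < n -> eps n l a (ea l a) = 0%R.
Proof.
move=> ha; rewrite /eps ifF; last lia.
rewrite ifT; last lia.
rewrite /ea /= upd_diff; last lia.
rewrite /zerof; postac.
Qed.

Lemma phi_ean n l : 1 <= n -> phi n l n (ea l n) = Posz (2 * l).
Proof.
move=> hn; rewrite /phi ifF; last lia.
rewrite ifF; last lia.
by rewrite eqxx /ea /= upd_same addn0.
Qed.

Lemma eps_ean n l : 1 <= n -> eps n l n (ea l n) = 0%R.
Proof.
move=> hn; rewrite /eps ifF; last lia.
rewrite ifF; last lia.
by rewrite eqxx /ea /=.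
Qed.

Lemma phi_eb n l a : 1 <= a < n -> phi n l (n - a) (eb n l a) = Posz l.
Proof.
move=> ha; rewrite /phi ifF; last lia.
rewrite ifT; last lia.
rewrite /eb /= (_ : n - a + 1 = (n - a).+1); last lia.
rewrite upd_same /zerof /=; postac.
Qed.

Lemma eps_eb n l a : 1 <= a < n -> eps n l (n - a) (eb n l a) = 0%R.
Proof.
move=> ha; rewrite /eps ifF; last lia.
rewrite ifT; last lia.
rewrite /eb /= (_ : n - a + 1 = (n - a).+1); last lia.
rewrite upd_same upd_diff; last lia.
rewrite /zerof /=; postac.
Qed.

Lemma phi_ebn n l : 1 <= n -> phi n l 0 (eb n l n) = Posz (2 * l).
Proof.
move=> hn; rewrite /phi /eb /= (_ : n - n + 1 = 1); last lia.
rewrite sB_eb; last lia.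
rewrite upd_same /zerof /=; postac.
Qed.

Lemma eps_ebn n l : 1 <= n -> eps n l 0 (eb n l n) = 0%R.
Proof.
move=> hn; rewrite /eps /eb /= (_ : n - n + 1 = 1); last lia.
rewrite sB_eb; last lia.
rewrite upd_same /zerof /=; postac.
Qed.

Lemma eps_ge0 n l i b : i != 0 -> (0 <= eps n l i b)%R.
Proof.
move=> /negbTE hi; rewrite /eps hi.
case: ifP => _; last by case: ifP.
postac.
Qed.



Lemma bbA n l j a : 1 <= n -> 1 <= a <= n -> bb n l j a = Some (ea l a).
Proof.
move=> hn; elim: a => [|a IH] ha; first lia.
case: (posnP a) => [a0|apos].
  subst a; rewrite /= idx_lo // phi0_zero /= /zeroE fpow_up0 //; last first.
    by rewrite sB_zero.
rewrite /= IH; last lia.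
rewrite idx_lo; last lia.
rewrite phi_ea; last lia.
rewrite /= /ea fpow_up //; try (by updtac); try (by rewrite -/(ea l a) sB_ea //; lia).
by congr Some; apply: elt_eq => [i||i] /=; updtac.
Qed.

Lemma bbB n l j a : 1 <= n -> 1 <= a <= n -> bb n l j (n + a) = Some (eb n l a).
Proof.
move=> hn; elim: a => [|a IH] ha; first lia.
case: (posnP a) => [a0|apos].
  subst a; rewrite addn1 /= bbA //; last lia.
  rewrite idx_lo // phi_ean //= /ea.
  have hs : sB n (Elt (upd zerof n l) 0 zerof) <= l by rewrite -/(ea l n) sB_ea //; lia.
  have [A _] := @fpow_n n l l (upd zerof n l) zerof hn hs.
  rewrite A; last by rewrite upd_same.
  by congr Some; apply: elt_eq => [i||i] /=; updtac.
rewrite addnS /= IH; last lia.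
rewrite idx_hi; last lia.
rewrite phi_eb; last lia.
rewrite /= /eb fpow_down //; try (by updtac); try (by rewrite sB_eb //; lia).
by congr Some; apply: elt_eq => [i||i] /=; updtac.
Qed.
Theorem mainTheorem7 (n l : nat) (hn : 2 <= n) (hl : 1 <= l) :
  (* (II) *)
  (forall j, 1 <= j -> forall b, Bset n l j (dd n) b <-> inB n l b) /\
  (* (III) *)
  (forall j a b, 1 <= j -> 1 <= a <= dd n -> Bset n l j a.-1 b ->
     (Posz (lamh l j (idx n j a)) <= eps n l (idx n j a) b)%R) /\
  (* (IV') *)
  (forall j a, 1 <= j -> 1 <= a <= dd n ->
     exists b, bb n l j a = Some b /\
       eps n l (inext n j a) b = 0%R /\ (0 < phi n l (inext n j a) b)%R) /\
  (forall j, 1 <= j ->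
     exists b, bb n l j (dd n) = Some b /\
       bb n l j.+1 0 = fpow n l (idx n j.+1 1) (lamh l j.+1 (idx n j.+1 1)) b) /\
  (* Moreover: description of B^{(j)}_a *)
  (forall j, 1 <= j -> forall b, Bset n l j 0 b <-> b = zeroE) /\
  (forall j a, 1 <= j -> 1 <= a <= n -> forall b,
     Bset n l j a b <->
     inB n l b /\ (forall i, a < i -> ex b i = 0) /\ ex0 b = 0 /\
       (forall i, exb b i = 0)) /\
  (forall j a, 1 <= j -> 1 <= a <= n.-1 -> forall b,
     Bset n l j (n + a) b <->
     inB n l b /\ (forall i, i < n - a + 1 -> exb b i = 0)) /\
  (* description of b^{(j)}_a *)
  (forall j, 1 <= j -> bb n l j 0 = Some zeroE) /\
  (forall j a, 1 <= j -> 1 <= a <= n ->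
     bb n l j a = Some (Elt (upd zerof a l) 0 zerof) /\
     bb n l j (n + a) = Some (Elt zerof 0 (upd zerof (n - a + 1) l))).

Proof.
have hn1 : 1 <= n by lia.
have hdd : dd n = n + n by rewrite /dd; lia.
split.
  move=> j _ b; rewrite hdd BsetB //; last lia.
  split => [[]//|hb]; split => // i hi.
  have -> : i = 0 by lia.
  by case: hb => _ /(_ 0 (erefl _)) [].
split.
  move=> j a b _ ha.
  case: (ltngtP a 1) => [a0|a1|a1]; first lia.
    move=> _; have hi : idx n j a != 0 by rewrite /idx; case: ifP; lia.
    rewrite /lamh (negbTE hi); exact: eps_ge0.
  subst a; rewrite /= => ->.
  rewrite idx_lo // /lamh /= eps0_zero; lia.
split.
  move=> j a _ ha.
  have [h1|h1] : a <= n \/ n < a by lia.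
    exists (ea l a); rewrite (@bbA n l j a hn1 (ltac:(lia))); split => //.
    rewrite /inext ifF; last by rewrite /dd; lia.
    case: (ltngtP a n) => han; last first.
    - subst a; rewrite idx_lo // eps_ean ?phi_ean //; lia.
    - lia.
    - rewrite idx_lo; last lia.
      rewrite eps_ea ?phi_ea //; lia.
  have [a' ea'] : exists a', a = n + a' by exists (a - n); lia.
  subst a.
  exists (eb n l a'); rewrite (@bbB n l j a' hn1 (ltac:(lia))).
  split => //.
  case: (ltngtP a' n) => h2; last first.
  - subst a'; rewrite /inext -hdd eqxx idx_lo // eps_ebn ?phi_ebn //; lia.
  - lia.
  - rewrite /inext ifF; last by rewrite /dd; lia.
    rewrite idx_hi; last lia.
    rewrite eps_eb ?phi_eb //; lia.
split.
  move=> j _; exists (eb n l n); split; first by rewrite hdd (@bbB n l j n hn1 (ltac:(lia))).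
  rewrite /= idx_lo // /lamh /= /eb (_ : n - n + 1 = 1); last lia.
  rewrite fpow_down0 //; try (by updtac); try (by rewrite sB_eb //; lia).
  by congr Some; apply: elt_eq => [i||i] /=; updtac.
split; first by [].
split.
  move=> j a _ ha b; exact: (@BsetA n l j a hn1 (ltac:(lia)) b).
split.
  move=> j a _ ha b; exact: (@BsetB n l j a hn1 (ltac:(lia)) b).
split; first by [].
move=> j a _ ha; split; [exact: (@bbA n l j a hn1 ha) | exact: (@bbB n l j a hn1 ha)].
Qed.
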